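(* Let $X$ be a separable Banach space. There exists a sequence $(a_k)_{k\ge 0}$ of elements of $X$ such that: (1) for every infinite set $A\subset\mathbb{N}$, the closed linear span of $\{a_k : k\in A\}$ equals $X$; (2) for every bounded linear operator $T:X\to X$, setting $\eta=\{k\ge 0: Ta_k\neq 0\}$, the family $\big(Ta_k/\|Ta_k\|\big)_{k\in\eta}$ is relatively compact in $X$.
   Context: ''span'' denotes the closed linear span. *)

(* Defs.v *)
From Stdlib Require Import Reals List.
Open Scope R_scope.

Record NormedSpace := {
  carrier :> Type;
  zero : carrier;
  add : carrier -> carrier -> carrier;
  opp : carrier -> carrier;
  scal : R -> carrier -> carrier;
  norm : carrier -> R;
  add_assoc : forall x y z, add x (add y z) = add (add x y) z;
  add_comm : forall x y, add x y = add y x;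
  add_zero_r : forall x, add x zero = x;
  add_opp_r : forall x, add x (opp x) = zero;
  scal_assoc : forall a b x, scal a (scal b x) = scal (a * b) x;
  scal_one : forall x, scal 1 x = x;
  scal_distr_l : forall a x y, scal a (add x y) = add (scal a x) (scal a y);
  scal_distr_r : forall a b x, scal (a + b) x = add (scal a x) (scal b x);
  norm_zero_iff : forall x, norm x = 0 <-> x = zero;
  norm_scal : forall a x, norm (scal a x) = Rabs a * norm x;
  norm_triangle : forall x y, norm (add x y) <= norm x + norm y
}.

Arguments zero {_}.
Arguments add {_} _ _.
Arguments opp {_} _.
Arguments scal {_} _ _.
Arguments norm {_} _.

Definition dist {X : NormedSpace} (x y : X) : R := norm (add x (opp y)).

Definition complete (X : NormedSpace) : Prop :=
  forall u : nat -> X,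
    (forall eps, 0 < eps -> exists N, forall m n, (N <= m)%nat -> (N <= n)%nat ->
        dist (u m) (u n) < eps) ->
    exists l : X, forall eps, 0 < eps -> exists N, forall n, (N <= n)%nat ->
        dist (u n) l < eps.

Record BanachSpace := {
  bs_space :> NormedSpace;
  bs_complete : complete bs_space
}.

Definition separable (X : NormedSpace) : Prop :=
  exists d : nat -> X, forall (x : X) eps, 0 < eps -> exists n, dist x (d n) < eps.

Definition closure {X : NormedSpace} (S : X -> Prop) : X -> Prop :=
  fun x => forall eps, 0 < eps -> exists y, S y /\ dist x y < eps.

Inductive span {X : NormedSpace} (S : X -> Prop) : X -> Prop :=
  | span_zero : span S zero
  | span_gen : forall x, S x -> span S x
  | span_add : forall x y, span S x -> span S y -> span S (add x y)
  | span_scal : forall a x, span S x -> span S (scal a x).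

Definition closed_span {X : NormedSpace} (S : X -> Prop) : X -> Prop :=
  closure (span S).

Definition infinite_nat_set (A : nat -> Prop) : Prop :=
  forall N, exists k, (N <= k)%nat /\ A k.

Definition bounded_linear {X : NormedSpace} (T : X -> X) : Prop :=
  (forall x y, T (add x y) = add (T x) (T y)) /\
  (forall a x, T (scal a x) = scal a (T x)) /\
  (exists C, forall x, norm (T x) <= C * norm x).

Definition is_open {X : NormedSpace} (U : X -> Prop) : Prop :=
  forall x, U x -> exists eps, 0 < eps /\ forall y, dist y x < eps -> U y.

Definition compact {X : NormedSpace} (K : X -> Prop) : Prop :=
  forall (I : Type) (U : I -> X -> Prop),
    (forall i, is_open (U i)) ->
    (forall x, K x -> exists i, U i x) ->
    exists l : list I, forall x, K x -> exists i, In i l /\ U i x.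

Definition relatively_compact {X : NormedSpace} (S : X -> Prop) : Prop :=
  compact (closure S).

(* Main.v *)
From Stdlib Require Import Reals Lra Lia List Classical ClassicalEpsilon.
Require Import Defs.
Open Scope R_scope.


Lemma add_zero_l {X : NormedSpace} (x : X) : add zero x = x.
Proof. rewrite add_comm; apply add_zero_r. Qed.
Lemma add_opp_l {X : NormedSpace} (x : X) : add (opp x) x = zero.
Proof. rewrite add_comm; apply add_opp_r. Qed.
Lemma add_cancel_l {X : NormedSpace} (a b c : X) : add a b = add a c -> b = c.
Proof.
  intro H. rewrite <- (add_zero_l b), <- (add_zero_l c), <- (add_opp_l a).
  rewrite <- !add_assoc, H; reflexivity.
Qed.
Lemma opp_unique {X : NormedSpace} (a b : X) : add a b = zero -> b = opp a.
Proof. intro H. apply (add_cancel_l a). rewrite H, add_opp_r; reflexivity. Qed.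
Lemma opp_opp {X : NormedSpace} (x : X) : opp (opp x) = x.
Proof. symmetry; apply opp_unique, add_opp_l. Qed.
Lemma norm_zero {X : NormedSpace} : norm (@zero X) = 0.
Proof. apply norm_zero_iff; reflexivity. Qed.
Lemma scal_zero_l {X : NormedSpace} (x : X) : scal 0 x = zero.
Proof. apply norm_zero_iff. rewrite norm_scal, Rabs_R0; ring. Qed.
Lemma scal_zero_r {X : NormedSpace} (a : R) : scal a (@zero X) = zero.
Proof. apply norm_zero_iff. rewrite norm_scal, norm_zero; ring. Qed.
Lemma opp_scal {X : NormedSpace} (x : X) : opp x = scal (-1) x.
Proof.
  symmetry; apply opp_unique. rewrite <- (scal_one _ x) at 1.
  rewrite <- scal_distr_r. replace (1 + -1) with 0 by ring. apply scal_zero_l.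
Qed.
Lemma norm_opp {X : NormedSpace} (x : X) : norm (opp x) = norm x.
Proof. rewrite opp_scal, norm_scal. replace (Rabs (-1)) with 1 by (symmetry; rewrite Rabs_left; lra). ring. Qed.
Lemma opp_add {X : NormedSpace} (x y : X) : opp (add x y) = add (opp x) (opp y).
Proof. rewrite !opp_scal, scal_distr_l; reflexivity. Qed.
Lemma scal_opp {X : NormedSpace} a (x : X) : scal a (opp x) = opp (scal a x).
Proof. rewrite !opp_scal, !scal_assoc. f_equal; ring. Qed.
Lemma add_swap {X : NormedSpace} (x y z : X) : add x (add y z) = add y (add x z).
Proof. rewrite !add_assoc, (add_comm _ x y); reflexivity. Qed.
Lemma opp_zero {X : NormedSpace} : opp (@zero X) = zero.
Proof. rewrite opp_scal; apply scal_zero_r. Qed.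

Definition sub {X : NormedSpace} (x y : X) := add x (opp y).

Lemma sub_add_add {X : NormedSpace} (x y z : X) : add (add x y) (opp (add x z)) = add y (opp z).
Proof.
  rewrite opp_add, <- add_assoc, (add_swap y), add_assoc, add_opp_r, add_zero_l; reflexivity.
Qed.
Lemma scal_sub {X : NormedSpace} a (x y : X) : add (scal a x) (opp (scal a y)) = scal a (add x (opp y)).
Proof. rewrite scal_distr_l, scal_opp; reflexivity. Qed.
Lemma sub_tri {X : NormedSpace} (x y z : X) : add x (opp z) = add (add x (opp y)) (add y (opp z)).
Proof. rewrite <- add_assoc, (add_assoc _ (opp y)), add_opp_l, add_zero_l; reflexivity. Qed.
Lemma opp_sub {X : NormedSpace} (x y : X) : opp (add x (opp y)) = add y (opp x).
Proof. rewrite opp_add, opp_opp, add_comm; reflexivity. Qed.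
Lemma add_sub {X : NormedSpace} (x y : X) : add y (add x (opp y)) = x.
Proof. rewrite add_swap, add_opp_r, add_zero_r; reflexivity. Qed.
Lemma sub_sums {X : NormedSpace} (x y x' y' : X) :
  add (add x y) (opp (add x' y')) = add (add x (opp x')) (add y (opp y')).
Proof. rewrite opp_add, <- !add_assoc, (add_swap y); reflexivity. Qed.
Lemma norm_identity {X : NormedSpace} a b (v w : X) :
  add (scal a v) (opp (scal b w)) = add (scal b (add v (opp w))) (scal (a - b) v).
Proof.
  rewrite scal_distr_l, scal_opp, <- add_assoc, add_swap. idtac.
  rewrite <- scal_distr_r. replace (b + (a - b)) with a by ring. apply add_comm.
Qed.

Lemma dist_sym {X : NormedSpace} (x y : X) : dist x y = dist y x.
Proof. unfold dist. rewrite <- norm_opp, opp_sub; reflexivity. Qed.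
Lemma dist_tri {X : NormedSpace} (x y z : X) : dist x z <= dist x y + dist y z.
Proof. unfold dist. rewrite (sub_tri x y z). apply norm_triangle. Qed.
Lemma dist_refl {X : NormedSpace} (x : X) : dist x x = 0.
Proof. unfold dist. rewrite add_opp_r; apply norm_zero. Qed.
Lemma dist_eq {X : NormedSpace} (x y : X) : dist x y = 0 -> x = y.
Proof.
  unfold dist; intro H. apply norm_zero_iff in H.
  rewrite <- (add_sub x y), H, add_zero_r; reflexivity.
Qed.
Lemma norm_nonneg {X : NormedSpace} (x : X) : 0 <= norm x.
Proof.
  pose proof (norm_triangle _ x (opp x)). rewrite add_opp_r, norm_zero, norm_opp in H. lra.
Qed.
Lemma dist_nonneg {X : NormedSpace} (x y : X) : 0 <= dist x y.
Proof. apply norm_nonneg. Qed.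
Lemma dist_scal {X : NormedSpace} a (x y : X) : dist (scal a x) (scal a y) = Rabs a * dist x y.
Proof. unfold dist. rewrite scal_sub, norm_scal; reflexivity. Qed.
Lemma dist_add {X : NormedSpace} (x y x' y' : X) : dist (add x y) (add x' y') <= dist x x' + dist y y'.
Proof. unfold dist. rewrite sub_sums. apply norm_triangle. Qed.
Lemma dist_add_l {X : NormedSpace} (x y z : X) : dist (add x y) (add x z) = dist y z.
Proof. unfold dist. rewrite sub_add_add; reflexivity. Qed.
Lemma norm_le_dist {X : NormedSpace} (x y : X) : norm x <= norm y + dist x y.
Proof. unfold dist. rewrite <- (add_sub x y) at 1. apply norm_triangle. Qed.
Lemma dist_zero_r {X : NormedSpace} (x : X) : dist x zero = norm x.
Proof. unfold dist; rewrite opp_zero, add_zero_r; reflexivity. Qed.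
Lemma dist_add_self {X : NormedSpace} (e z : X) : dist (add e z) e = norm z.
Proof. rewrite <- (add_zero_r _ e) at 2. rewrite dist_add_l, dist_zero_r; reflexivity. Qed.

Lemma le_eps (a b : R) : (forall eps, 0 < eps -> a <= b + eps) -> a <= b.
Proof.
  intro H. destruct (Rle_or_lt a b) as [h|h]; auto.
  specialize (H ((a - b)/2) ltac:(lra)). lra.
Qed.

Lemma cs_span {X : NormedSpace} (S : X -> Prop) x : span S x -> closed_span S x.
Proof. intros H eps He. exists x. split; auto. rewrite dist_refl; auto. Qed.

Lemma cs_closed {X : NormedSpace} (S : X -> Prop) x :
  (forall eps, 0 < eps -> exists y, closed_span S y /\ dist x y < eps) -> closed_span S x.
Proof.
  intros H eps He. destruct (H (eps/2) ltac:(lra)) as [y [Hy Hd]].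
  destruct (Hy (eps/2) ltac:(lra)) as [z [Hz Hd']].
  exists z; split; auto. pose proof (dist_tri x y z). lra.
Qed.

Lemma cs_add {X : NormedSpace} (S : X -> Prop) x y :
  closed_span S x -> closed_span S y -> closed_span S (add x y).
Proof.
  intros Hx Hy eps He. destruct (Hx (eps/2) ltac:(lra)) as [x' [Hx' Dx]].
  destruct (Hy (eps/2) ltac:(lra)) as [y' [Hy' Dy]].
  exists (add x' y'); split. apply span_add; auto.
  pose proof (dist_add x y x' y'). lra.
Qed.

Lemma cs_scal {X : NormedSpace} (S : X -> Prop) a x :
  closed_span S x -> closed_span S (scal a x).
Proof.
  intros Hx eps He. pose proof (Rabs_pos a).
  destruct (Hx (eps/(Rabs a + 1))) as [x' [Hx' Dx]].
  { apply Rdiv_lt_0_compat; lra. }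
  exists (scal a x'); split. apply span_scal; auto.
  rewrite dist_scal. apply Rle_lt_trans with (Rabs a * (eps / (Rabs a + 1))).
  apply Rmult_le_compat_l; [lra|]. pose proof (dist_nonneg x x'). lra.
  unfold Rdiv. replace (Rabs a * (eps * / (Rabs a + 1))) with (eps * (Rabs a / (Rabs a + 1))) by (field; lra).
  rewrite <- (Rmult_1_r eps) at 2. apply Rmult_lt_compat_l; auto.
  apply Rmult_lt_reg_r with (Rabs a + 1); [lra|]. unfold Rdiv; rewrite Rmult_assoc, Rinv_l; lra.
Qed.

Lemma closure_of {X : NormedSpace} (S : X -> Prop) x : S x -> closure S x.
Proof. intros H eps He. exists x; split; auto. rewrite dist_refl; auto. Qed.

Lemma finite_lemma {X : NormedSpace} (P : nat -> Prop) (u : nat -> X) (x : X) : forall N,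
  (forall r, 0 < r -> exists k, (k < N)%nat /\ P k /\ dist x (u k) < r) ->
  exists k, (k < N)%nat /\ P k /\ x = u k.
Proof.
  induction N as [|N IH]; intro H.
  - destruct (H 1 ltac:(lra)) as [k [Hk _]]. inversion Hk.
  - destruct (classic (P N /\ x = u N)) as [[HP Hx]|Hn].
    + exists N; repeat split; auto.
    + destruct (classic (P N)) as [HP|HP].
      * assert (Hd : 0 < dist x (u N)).
        { destruct (dist_nonneg x (u N)) as [h|h]; auto. exfalso; apply Hn; split; auto.
          apply dist_eq; auto. }
        destruct IH as [k [Hk Hk']].
        { intros r Hr. destruct (H (Rmin r (dist x (u N)))) as [k [Hk [HPk Hdk]]].
          { apply Rmin_pos; auto. }
          destruct (Nat.eq_dec k N) as [->|Hne].
          - pose proof (Rmin_r r (dist x (u N))). lra.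
          - exists k; repeat split; auto. lia. pose proof (Rmin_l r (dist x (u N))). lra. }
        exists k; split; auto.
      * destruct IH as [k [Hk Hk']].
        { intros r Hr. destruct (H r Hr) as [k [Hk [HPk Hdk]]].
          destruct (Nat.eq_dec k N) as [->|Hne]. contradiction.
          exists k; repeat split; auto. lia. }
        exists k; split; auto.
Qed.

Lemma rc_of_conv {X : NormedSpace} (P : nat -> Prop) (u : nat -> X) (L : X) :
  (forall eps, 0 < eps -> exists N, forall k, (N <= k)%nat -> P k -> dist (u k) L < eps) ->
  relatively_compact (fun y => exists k, P k /\ y = u k).
Proof.
  intros Hconv I U Hopen Hcover.
  set (S := fun y => exists k, P k /\ y = u k).
  assert (Hl1 : exists eps0 l1, 0 < eps0 /\ forall x, closure S x -> dist x L < eps0 ->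
             exists i, In i l1 /\ U i x).
  { destruct (classic (exists i, U i L)) as [[i Hi]|Hn].
    - destruct (Hopen i L Hi) as [eps0 [He Hb]].
      exists eps0, (i :: nil); split; auto. intros x _ Hx. exists i; split; simpl; auto.
    - assert (HL : ~ closure S L).
      { intro HL. destruct (Hcover L HL) as [i Hi]. apply Hn; eauto. }
      unfold closure in HL. apply not_all_ex_not in HL as [eps0 HL].
      apply imply_to_and in HL as [He HL].
      exists eps0, nil; split; auto. intros x Hx HxL. exfalso. apply HL.
      destruct (Hx (eps0 - dist x L)) as [y [Hy Hd]]. lra.
      exists y; split; auto. pose proof (dist_tri L x y). rewrite (dist_sym L x) in H. lra. }
  destruct Hl1 as [eps0 [l1 [He Hl1]]].
  destruct (Hconv (eps0/2) ltac:(lra)) as [N HN].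
  assert (Hl0 : exists l0, forall k, (k < N)%nat -> P k -> exists i, In i l0 /\ U i (u k)).
  { clear HN. induction N as [|N IH].
    - exists nil. intros k Hk. inversion Hk.
    - destruct IH as [l0 Hl0]. destruct (classic (P N)) as [HP|HP].
      + destruct (Hcover (u N)) as [i Hi].
        { apply closure_of. exists N; auto. }
        exists (i :: l0). intros k Hk HPk. destruct (Nat.eq_dec k N) as [->|Hne].
        * exists i; split; simpl; auto.
        * destruct (Hl0 k ltac:(lia) HPk) as [j [Hj Hj']]. exists j; split; simpl; auto.
      + exists l0. intros k Hk HPk. destruct (Nat.eq_dec k N) as [->|Hne]. contradiction.
        apply Hl0; auto. lia. }
  destruct Hl0 as [l0 Hl0].
  exists (l1 ++ l0). intros x Hx.
  destruct (Rlt_or_le (dist x L) eps0) as [h|h].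
  - destruct (Hl1 x Hx h) as [i [Hi Hi']]. exists i; split; auto. apply in_or_app; auto.
  - destruct (finite_lemma P u x N) as [k [Hk [HPk ->]]].
    + intros r Hr. destruct (Hx (Rmin r (eps0/2))) as [y [[k [HPk ->]] Hd]].
      { apply Rmin_pos; lra. }
      exists k. destruct (Nat.lt_ge_cases k N) as [Hk|Hk].
      * repeat split; auto. pose proof (Rmin_l r (eps0/2)); lra.
      * exfalso. pose proof (HN k Hk HPk). pose proof (Rmin_r r (eps0/2)).
        pose proof (dist_tri x (u k) L). lra.
    + destruct (Hl0 k Hk HPk) as [i [Hi Hi']]. exists i; split; auto. apply in_or_app; auto.
Qed.

Fixpoint PS {X : NormedSpace} (e : nat -> X) (t : R) (N : nat) (m : nat) : X :=
  match N with
  | O => zero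
  | S N' => add (e m) (scal t (PS e t N' (S m)))
  end.

Lemma PS_bound {X : NormedSpace} (e : nat -> X) t :
  (forall n, norm (e n) <= 1) -> 0 <= t <= 1/2 -> forall N m, norm (PS e t N m) <= 2.
Proof.
  intros He Ht. induction N as [|N IH]; intro m; simpl.
  - rewrite norm_zero; lra.
  - eapply Rle_trans; [apply norm_triangle|]. rewrite norm_scal, Rabs_right by lra.
    specialize (He m); specialize (IH (S m)). nra.
Qed.

Lemma PS_cauchy {X : NormedSpace} (e : nat -> X) t :
  (forall n, norm (e n) <= 1) -> 0 <= t <= 1/2 ->
  forall N p m, dist (PS e t (N + p) m) (PS e t N m) <= 2 * (1/2)^N.
Proof.
  intros He Ht. induction N as [|N IH]; intros p m; simpl.
  - rewrite dist_zero_r. rewrite Rmult_1_r. apply PS_bound; auto.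
  - rewrite dist_add_l, dist_scal, Rabs_right by lra. specialize (IH p (S m)).
    pose proof (dist_nonneg (PS e t (N + p) (S m)) (PS e t N (S m))).
    pose proof (pow_le (1/2) N ltac:(lra)). nra.
Qed.

Lemma half_pow_small eps : 0 < eps -> exists N, (1/2)^N < eps.
Proof.
  intro H. destruct (pow_lt_1_zero (1/2) ltac:(rewrite Rabs_right; lra) eps H) as [N HN].
  exists N. specialize (HN N (le_n _)). rewrite Rabs_right in HN; auto.
  apply Rle_ge, pow_le; lra.
Qed.

Definition is_lim {X : NormedSpace} (u : nat -> X) (l : X) :=
  forall eps, 0 < eps -> exists N, forall n, (N <= n)%nat -> dist (u n) l < eps.

Lemma lim_unique {X : NormedSpace} (u : nat -> X) l1 l2 : is_lim u l1 -> is_lim u l2 -> l1 = l2.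
Proof.
  intros H1 H2. apply dist_eq. apply Rle_antisym; [|apply dist_nonneg].
  apply le_eps. intros eps He. destruct (H1 (eps/2) ltac:(lra)) as [N1 h1].
  destruct (H2 (eps/2) ltac:(lra)) as [N2 h2].
  specialize (h1 (N1 + N2)%nat ltac:(lia)). specialize (h2 (N1 + N2)%nat ltac:(lia)).
  pose proof (dist_tri l1 (u (N1 + N2)%nat) l2). rewrite dist_sym in h1. lra.
Qed.

Definition Flim {X : BanachSpace} (e : nat -> X) (t : R) (m : nat) : X :=
  epsilon (inhabits (@zero X)) (fun l => is_lim (fun N => PS e t N m) l).

Lemma Flim_spec {X : BanachSpace} (e : nat -> X) t :
  (forall n, norm (e n) <= 1) -> 0 <= t <= 1/2 ->
  forall m, is_lim (fun N => PS e t N m) (Flim e t m).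
Proof.
  intros He Ht m. unfold Flim. apply epsilon_spec. apply bs_complete.
  intros eps Heps. destruct (half_pow_small (eps/4) ltac:(lra)) as [N HN].
  exists N. intros p q Hp Hq.
  pose proof (PS_cauchy e t He Ht N (p - N) m). pose proof (PS_cauchy e t He Ht N (q - N) m).
  replace (N + (p - N))%nat with p in H by lia. replace (N + (q - N))%nat with q in H0 by lia.
  pose proof (dist_tri (PS e t p m) (PS e t N m) (PS e t q m)). rewrite (dist_sym (PS e t q m)) in H0.
  lra.
Qed.

Lemma Flim_eq {X : BanachSpace} (e : nat -> X) t :
  (forall n, norm (e n) <= 1) -> 0 <= t <= 1/2 ->
  forall m, Flim e t m = add (e m) (scal t (Flim e t (S m))).
Proof.
  intros He Ht m. apply (lim_unique (fun N => PS e t (S N) m)).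
  - intros eps Heps. destruct (Flim_spec e t He Ht m eps Heps) as [N HN].
    exists N. intros n Hn. apply HN; lia.
  - intros eps Heps. destruct (Flim_spec e t He Ht (S m) eps Heps) as [N HN].
    exists N. intros n Hn. simpl. rewrite dist_add_l, dist_scal, Rabs_right by lra.
    specialize (HN n Hn). pose proof (dist_nonneg (PS e t n (S m)) (Flim e t (S m))). nra.
Qed.

Lemma Flim_bound {X : BanachSpace} (e : nat -> X) t :
  (forall n, norm (e n) <= 1) -> 0 <= t <= 1/2 ->
  forall m, norm (Flim e t m) <= 2.
Proof.
  intros He Ht m. apply le_eps. intros eps Heps.
  destruct (Flim_spec e t He Ht m eps Heps) as [N HN]. specialize (HN N (le_n _)).
  pose proof (norm_le_dist (Flim e t m) (PS e t N m)). rewrite dist_sym in H.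
  pose proof (PS_bound e t He Ht N m). lra.
Qed.

Lemma normalize_est {X : NormedSpace} (v w : X) : 0 < norm v -> 0 < norm w ->
  dist (scal (/ norm v) v) (scal (/ norm w) w) <= 2 * dist v w / norm w.
Proof.
  intros Hv Hw. unfold dist at 1. rewrite norm_identity.
  eapply Rle_trans; [apply norm_triangle|]. rewrite !norm_scal.
  fold (dist v w). rewrite Rabs_inv, (Rabs_right (norm w)) by lra.
  replace (/ norm v - / norm w) with ((norm w - norm v) * / norm w * / norm v) by (field; lra).
  rewrite !Rabs_mult, Rabs_inv, Rabs_inv, (Rabs_right (norm w)), (Rabs_right (norm v)) by lra.
  replace (Rabs (norm w - norm v) * / norm w * / norm v * norm v) with (Rabs (norm w - norm v) / norm w) by (field; lra).
  assert (Rabs (norm w - norm v) <= dist v w).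
  { pose proof (norm_le_dist v w). pose proof (norm_le_dist w v). rewrite dist_sym in H0.
    apply Rabs_le; lra. }
  unfold Rdiv. pose proof (Rinv_0_lt_compat _ Hw). nra.
Qed.

Lemma min_exists (Q : nat -> Prop) : forall n, Q n -> exists m, Q m /\ forall j, (j < m)%nat -> ~ Q j.
Proof.
  intro n. induction n as [n IH] using (well_founded_induction Wf_nat.lt_wf). intro Hn.
  destruct (classic (exists j, (j < n)%nat /\ Q j)) as [[j [Hj Qj]]|Hno].
  - apply (IH j Hj Qj).
  - exists n; split; auto. intros j Hj Qj. apply Hno; eauto.
Qed.

Definition tt (k : nat) : R := (1/2)^(S k).

Lemma tt_pos k : 0 < tt k.
Proof. apply pow_lt; lra. Qed.
Lemma half_pow_mono N p : (1/2)^(N + p) <= (1/2)^N.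
Proof.
  induction p as [|p IH]. rewrite Nat.add_0_r; lra.
  replace (N + S p)%nat with (S (N + p)) by lia. simpl. pose proof (pow_le (1/2) (N+p) ltac:(lra)). lra.
Qed.
Lemma tt_le k : tt k <= 1/2.
Proof. unfold tt. simpl. pose proof (pow_le (1/2) k ltac:(lra)).
  pose proof (half_pow_mono 0 k). simpl in H0. nra. Qed.
Lemma tt_small d : 0 < d -> exists N, forall k, (N <= k)%nat -> tt k < d.
Proof.
  intro Hd. destruct (half_pow_small d Hd) as [N HN]. exists N. intros k Hk.
  unfold tt. replace (S k) with (N + (S k - N))%nat by lia. pose proof (half_pow_mono N (S k - N)). lra.
Qed.

Lemma add_sub_l {X : NormedSpace} (e z : X) : add (add e z) (opp e) = z.
Proof. rewrite <- add_assoc, (add_comm _ z), add_assoc, add_opp_r, add_zero_l; reflexivity. Qed.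

Theorem mainTheorem1 (X : BanachSpace) (Hsep : separable X) :
  exists a : nat -> X,
    (forall A : nat -> Prop, infinite_nat_set A ->
       forall x : X, closed_span (fun y : X => exists k, A k /\ y = a k) x) /\
    (forall T : X -> X, bounded_linear T ->
       relatively_compact
         (fun y : X => exists k, T (a k) <> zero /\
                          y = scal (/ norm (T (a k))) (T (a k)))).
Proof.
  destruct Hsep as [d Hd].
  set (en := fun n => scal (/ (1 + norm (d n))) (d n)).
  assert (Hen : forall n, norm (en n) <= 1).
  { intro n. unfold en. rewrite norm_scal. pose proof (norm_nonneg (d n)).
    rewrite Rabs_right by (apply Rle_ge, Rlt_le, Rinv_0_lt_compat; lra).
    apply Rmult_le_reg_l with (1 + norm (d n)); [lra|].
    rewrite <- Rmult_assoc, Rinv_r by lra. lra. }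
  assert (Htt : forall k, 0 <= tt k <= 1/2).
  { intro k; pose proof (tt_pos k); pose proof (tt_le k); lra. }
  set (F := fun k m => Flim en (tt k) m).
  assert (Feq : forall k m, F k m = add (en m) (scal (tt k) (F k (S m)))).
  { intros k m. apply Flim_eq; auto. }
  assert (Fb : forall k m, norm (F k m) <= 2).
  { intros k m. apply Flim_bound; auto. }
  exists (fun k => F k 0%nat). split.
  - intros A HA x.
    set (Sg := fun y : X => exists k, A k /\ y = F k 0%nat).
    assert (Hem : forall m, (forall k, A k -> closed_span Sg (F k m)) -> closed_span Sg (en m)).
    { intros m Hm. apply cs_closed. intros eps Heps.
      destruct (tt_small (eps/2) ltac:(lra)) as [N HN]. destruct (HA N) as [k [Hk Ak]].
      exists (F k m). split; auto. rewrite dist_sym, (Feq k m), dist_add_self, norm_scal.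
      rewrite Rabs_right by (apply Rle_ge, Htt). specialize (HN k Hk). specialize (Fb k (S m)).
      pose proof (tt_pos k). nra. }
    assert (HF : forall m k, A k -> closed_span Sg (F k m)).
    { induction m as [|m IH].
      - intros k Ak. apply cs_span, span_gen. exists k; auto.
      - intros k Ak. pose proof (Hem m IH) as He.
        assert (E : F k (S m) = scal (/ tt k) (add (F k m) (opp (en m)))).
        { rewrite (Feq k m) at 1. rewrite add_sub_l, scal_assoc.
          rewrite Rinv_l by (pose proof (tt_pos k); lra). rewrite scal_one; reflexivity. }
        rewrite E. apply cs_scal, cs_add; auto. rewrite opp_scal. apply cs_scal; auto. }
    apply cs_closed. intros eps Heps. destruct (Hd x eps Heps) as [n Hn].
    exists (d n); split; auto.
    replace (d n) with (scal (1 + norm (d n)) (en n)).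
    + apply cs_scal, Hem. intros; apply HF; auto.
    + unfold en. rewrite scal_assoc. pose proof (norm_nonneg (d n)).
      rewrite Rinv_r by lra. apply scal_one.
  - intros T [Tadd [Tscal [C HC]]].
    set (C0 := Rabs C).
    assert (HC0 : forall x, norm (T x) <= C0 * norm x).
    { intro x. eapply Rle_trans; [apply HC|]. apply Rmult_le_compat_r; [apply norm_nonneg|apply RRle_abs]. }
    assert (HC0p : 0 <= C0) by apply Rabs_pos.
    assert (T0 : T zero = zero).
    { transitivity (T (scal 0 zero)). rewrite scal_zero_l; reflexivity. rewrite Tscal. apply scal_zero_l. }
    assert (TFeq : forall k m, T (F k m) = add (T (en m)) (scal (tt k) (T (F k (S m))))).
    { intros k m. rewrite (Feq k m) at 1. rewrite Tadd, Tscal; reflexivity. }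
    assert (TFb : forall k m, norm (T (F k m)) <= C0 * 2).
    { intros k m. eapply Rle_trans; [apply HC0|]. apply Rmult_le_compat_l; auto. }
    assert (Tpow : forall m k, (forall j, (j < m)%nat -> T (en j) = zero) ->
              T (F k 0%nat) = scal ((tt k)^m) (T (F k m))).
    { induction m as [|m IH]; intros k Hj.
      - simpl. symmetry; apply scal_one.
      - rewrite IH by (intros; apply Hj; lia). rewrite (TFeq k m), (Hj m (le_n _)), add_zero_l.
        rewrite scal_assoc. simpl. rewrite Rmult_comm. reflexivity. }
    destruct (classic (exists m, T (en m) <> zero)) as [[m0 Hm0]|Hno].
    + destruct (min_exists (fun m => T (en m) <> zero) m0 Hm0) as [m [Hm Hmin]].
      set (w := T (en m)).
      assert (Hw : 0 < norm w).
      { destruct (norm_nonneg w) as [h|h]; auto. exfalso; apply Hm. apply norm_zero_iff; auto. }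
      apply rc_of_conv with (L := scal (/ norm w) w).
      intros eps Heps.
      destruct (tt_small (eps * norm w / (4 * (C0 + 1)))) as [N HN].
      { apply Rdiv_lt_0_compat; nra. }
      exists N. intros k Hk HTa.
      assert (Hj : forall j, (j < m)%nat -> T (en j) = zero).
      { intros j Hjm. apply NNPP. apply Hmin; auto. }
      rewrite (Tpow m k Hj) in HTa |- *.
      set (W := T (F k m)) in *.
      pose proof (tt_pos k) as Ht. pose proof (pow_lt (tt k) m Ht) as Htm.
      assert (HW : 0 < norm W).
      { destruct (norm_nonneg W) as [h|h]; auto. exfalso; apply HTa.
        symmetry in h; apply norm_zero_iff in h. rewrite h. apply scal_zero_r. }
      assert (E : scal (/ norm (scal (tt k ^ m) W)) (scal (tt k ^ m) W) = scal (/ norm W) W).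
      { rewrite norm_scal, scal_assoc, Rabs_right by lra. f_equal. field. lra. }
      rewrite E.
      assert (DW : dist W w <= tt k * (C0 * 2)).
      { unfold W, w. rewrite (TFeq k m), dist_add_self, norm_scal, Rabs_right by lra.
        apply Rmult_le_compat_l; [lra|]. apply TFb. }
      eapply Rle_lt_trans; [apply normalize_est; auto|].
      specialize (HN k Hk).
      apply Rmult_lt_reg_r with (norm w); auto. unfold Rdiv. rewrite Rmult_assoc, Rinv_l by lra.
      assert (tt k * (4 * (C0 + 1)) < eps * norm w).
      { apply Rmult_lt_reg_r with (/ (4 * (C0 + 1))). apply Rinv_0_lt_compat; lra.
        rewrite Rmult_assoc, Rinv_r by lra. replace (eps * norm w * / (4 * (C0 + 1))) with (eps * norm w / (4 * (C0 + 1))) by reflexivity. lra. }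
      nra.
    + assert (Hall : forall j, T (en j) = zero).
      { intro j. apply NNPP. intro h. apply Hno; eauto. }
      assert (Ta0 : forall k, T (F k 0%nat) = zero).
      { intro k. apply norm_zero_iff. apply Rle_antisym; [|apply norm_nonneg].
        apply le_eps. intros eps Heps.
        destruct (half_pow_small (eps / (C0 * 2 + 1))) as [m Hm].
        { apply Rdiv_lt_0_compat; lra. }
        rewrite (Tpow m k (fun j _ => Hall j)), norm_scal.
        pose proof (pow_le (tt k) m ltac:(pose proof (tt_pos k); lra)).
        rewrite Rabs_right by lra.
        assert (tt k ^ m <= (1/2)^m) by (apply pow_incr; apply Htt).
        pose proof (TFb k m). pose proof (norm_nonneg (T (F k m))).
        assert ((1/2)^m * (C0 * 2 + 1) < eps).
        { apply Rmult_lt_reg_r with (/ (C0 * 2 + 1)). apply Rinv_0_lt_compat; lra.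
          rewrite Rmult_assoc, Rinv_r by lra. unfold Rdiv in Hm. lra. }
        nra. }
      apply rc_of_conv with (L := zero). intros eps Heps. exists 0%nat.
      intros k _ H. exfalso; apply H, Ta0.
Qed.
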